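(* Let $R$ be an integral domain, $n\ge2$, and $I$ a proper subset of $\{1,\ldots,n\}$. Then $\mathbf{U}_n(R)$ is the Hirsch–Plotkin radical of $\mathbf{S}^I_n(R)$, i.e. the unique maximal normal locally nilpotent subgroup of $\mathbf{S}^I_n(R)$. In particular, $\mathbf{U}_n(R)$ is a characteristic subgroup of $\mathbf{S}^I_n(R)$.
   Context: $\mathbf{S}^I_n(R)$ is the group of upper triangular $n\times n$ matrices over $R$ with diagonal entries in $U(R)$, the $j$-th diagonal entry equal to $1$ for $j\notin I$; $\mathbf{U}_n(R)$ is its subgroup of upper unitriangular matrices. *)

(* Defs.v *)
From HB Require Import structures.
From mathcomp Require Import all_boot all_order all_algebra.
Set Implicit Arguments. Unset Strict Implicit. Unset Printing Implicit Defensive.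
Import GRing.Theory.
Local Open Scope ring_scope.

Section MatGroups.
Variables (R : comUnitRingType) (n : nat).
Local Notation mx := 'M[R]_n.

Definition upper_tri (A : mx) : Prop := forall i j : 'I_n, (j < i)%N -> A i j = 0.

(* S^I_n(R): upper triangular, diagonal entries units, A j j = 1 for j \notin I
   (indices are 'I_n = {0,...,n-1} instead of {1,...,n}). *)
Definition Sgrp (I : {set 'I_n}) (A : mx) : Prop :=
  [/\ upper_tri A,
      forall i : 'I_n, A i i \is a GRing.unit &
      forall i : 'I_n, i \notin I -> A i i = 1].

Definition Ugrp (A : mx) : Prop := upper_tri A /\ forall i : 'I_n, A i i = 1.

Definition is_subgroup (G H : mx -> Prop) : Prop :=
  [/\ forall x, H x -> G x,
      H 1%:M,
      forall x y, H x -> H y -> H (x *m y) &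
      forall x, H x -> H (invmx x)].

Inductive gen (X : mx -> Prop) : mx -> Prop :=
| gen1 : gen X 1%:M
| genX x : X x -> gen X x
| genM x y : gen X x -> gen X y -> gen X (x *m y)
| genV x : gen X x -> gen X (invmx x).

Definition commx (x y : mx) : mx := invmx x *m invmx y *m x *m y.

(* lower central series: gamma_1 = H, gamma_{k+1} = [gamma_k, H] *)
Fixpoint lcs (H : mx -> Prop) (k : nat) : mx -> Prop :=
  match k with
  | 0 => H
  | k'.+1 => gen (fun z => exists x y, [/\ lcs H k' x, H y & z = commx x y])
  end.

Definition nilpotent_grp (H : mx -> Prop) : Prop :=
  exists c : nat, forall x, lcs H c x -> x = 1%:M.

Definition locally_nilpotent (H : mx -> Prop) : Prop :=
  forall s : seq mx, (forall x, x \in s -> H x) ->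
    nilpotent_grp (gen (fun x => x \in s)).

Definition is_normal (G H : mx -> Prop) : Prop :=
  is_subgroup G H /\
  forall g h, G g -> H h -> H (invmx g *m h *m g).

Definition hirsch_plotkin_radical (G H : mx -> Prop) : Prop :=
  [/\ is_normal G H, locally_nilpotent H &
      forall N, is_normal G N -> locally_nilpotent N -> forall x, N x -> H x].

Definition is_automorphism (G : mx -> Prop) (f : mx -> mx) : Prop :=
  [/\ forall x, G x -> G (f x),
      forall x y, G x -> G y -> f x = f y -> x = y,
      forall y, G y -> exists x, G x /\ f x = y &
      forall x y, G x -> G y -> f (x *m y) = f x *m f y].

Definition characteristic (G H : mx -> Prop) : Prop :=
  is_subgroup G H /\
  forall f, is_automorphism G f ->
    forall y, H y <-> exists x, H x /\ f x = y.

End MatGroups.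

(* Main.v *)
Require Import Defs.
From mathcomp Require Import all_boot all_order all_algebra.
From mathcomp Require Import zify ring.
Set Implicit Arguments. Unset Strict Implicit. Unset Printing Implicit Defensive.
Import GRing.Theory.
Local Open Scope ring_scope.

Lemma zm1 (V : zmodType) (a b c o : V) : a - o = ((a - b) - (c - o)) + (b - o) + (c - o).
Proof. by rewrite addrAC subrK addrA subrK. Qed.
Lemma comm_expand (V : pzRingType) (x y : V) : (x-1)*(y-1) - (y-1)*(x-1) = x*y - y*x.
Proof.
rewrite !mulrBl !mulrBr !mul1r !mulr1.
rewrite !opprB !addrA.
set a := x*y; set b := y*x.
congr (_ - b).
rewrite (addrAC _ (-1) y) (addrAC _ x y) subrK (addrAC _ 1 x) subrK addrK //.
Qed.

Section Gen.
Variables (R : comUnitRingType) (n : nat).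
Local Notation mx := 'M[R]_n.

Definition Dk (k : nat) (M : mx) : Prop := forall i j : 'I_n, (j < i + k)%N -> M i j = 0.

Lemma DkM k l (A B : mx) : Dk k A -> Dk l B -> Dk (k + l) (A *m B).
Proof.
move=> hA hB i j hij; rewrite !mxE big1 // => m _.
have [hm|hm] := ltnP m (i + k); first by rewrite hA // mul0r.
by rewrite hB ?mulr0 //; lia.
Qed.

Lemma DkD k (A B : mx) : Dk k A -> Dk k B -> Dk k (A + B).
Proof. by move=> hA hB i j h; rewrite !mxE hA ?hB ?addr0. Qed.
Lemma DkN k (A : mx) : Dk k A -> Dk k (- A).
Proof. by move=> hA i j h; rewrite !mxE hA ?oppr0. Qed.
Lemma DkB k (A B : mx) : Dk k A -> Dk k B -> Dk k (A - B).
Proof. by move=> hA hB; apply: DkD => //; apply: DkN. Qed.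
Lemma Dk0 k : Dk k (0 : mx).
Proof. by move=> i j _; rewrite mxE. Qed.
Lemma Dk_le k l (A : mx) : (l <= k)%N -> Dk k A -> Dk l A.
Proof. by move=> hl hA i j h; apply: hA; lia. Qed.
Lemma Dkn k (A : mx) : (n <= k)%N -> Dk k A -> A = 0.
Proof. move=> hk hA; apply/matrixP => i j; rewrite mxE hA //; have := ltn_ord j; lia. Qed.
Lemma Dk1 : Dk 0 (1%:M : mx).
Proof. by move=> i j h; rewrite mxE; case: eqP => // e; move: h; rewrite e; lia. Qed.
Lemma Dk_sum k (m : nat) (F : nat -> mx) : (forall i, (i < m)%N -> Dk k (F i)) ->
  Dk k (\sum_(i < m) F i).
Proof.
elim: m => [|m IH] h; first by rewrite big_ord0; apply: Dk0.
rewrite big_ord_recr /=; apply: DkD; first by apply: IH => i hi; apply: h; lia.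
by apply: h.
Qed.
Lemma DkX k (A : mx) m : Dk k A -> Dk (k * m) (A ^+ m).
Proof.
move=> hA; elim: m => [|m IH]; first by rewrite muln0 expr0; exact: Dk1.
rewrite exprS -mulmxE mulnS; exact: DkM.
Qed.

Lemma upper_Dk (A : mx) : upper_tri A <-> Dk 0 A.
Proof. by split=> h i j hij; apply: h; move: hij; rewrite addn0. Qed.

Lemma diag_prod (A B : mx) (i : 'I_n) : Dk 0 A -> Dk 0 B -> (A *m B) i i = A i i * B i i.
Proof.
move=> hA hB; rewrite mxE (bigD1 i) //= big1 ?addr0 // => m hm.
have [h|h] := ltnP m i; first by rewrite hA ?mul0r // addn0.
by rewrite hB ?mulr0 // addn0 ltn_neqAle h andbT eq_sym.
Qed.

Lemma series_inv (X : mx) : Dk 1 X ->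
  (1%:M - X) *m (\sum_(i < n) X ^+ i) = 1%:M.
Proof.
move=> hX; have Xn : X ^+ n = 0 by apply: (Dkn (k := 1 * n)) => //; [rewrite mul1n | exact: DkX].
have := subrX1 X n; rewrite Xn sub0r mulmxE idmxE => h.
by rewrite -opprB mulNr -h opprK.
Qed.

Lemma Dk_diag (d : 'rV[R]_n) : Dk 0 (diag_mx d).
Proof. move=> i j h; rewrite mxE; case: eqP => [e|]; last by rewrite mulr0n. by move: h; rewrite e; lia. Qed.

Lemma ginv (g : mx) : Dk 0 g -> (forall i, g i i \is a GRing.unit) ->
  [/\ g \in unitmx, Dk 0 (invmx g) & forall i, invmx g i i = (g i i)^-1].
Proof.
move=> hg hu.
pose Dinv := diag_mx (\row_i (g i i)^-1).
pose X := 1%:M - Dinv *m g.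
have hX : Dk 1 X.
  move=> i j h; rewrite /X mul_diag_mx !mxE.
  have [e|ne] := eqVneq i j.
    by subst j; rewrite mulVr // subrr.
  move/eqP: ne => ne.
  have ne' : (nat_of_ord i <> nat_of_ord j) by move=> e; apply: ne; apply: val_inj.
  rewrite (hg i j) ?mulr0 ?subrr //; lia.
have hS := series_inv hX.
have e1 : Dinv *m g = 1%:M - X by rewrite /X opprB addrC subrK.
have hS2 : ((\sum_(i < n) X ^+ i) *m Dinv) *m g = 1%:M.
  by rewrite -mulmxA e1; apply: mulmx1C.
have [_ ug] := mulmx1_unit hS2.
have einv : invmx g = (\sum_(i < n) X ^+ i) *m Dinv.
  by rewrite -[invmx g]mul1mx -hS2 -(mulmxA _ g) mulmxV // mulmx1.
have hD : Dk 0 (invmx g).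
  rewrite einv -[0%N]/(0 + 0)%N; apply: DkM; last exact: Dk_diag.
  apply: Dk_sum => i _; apply: (Dk_le (k := 1 * i)) => //; exact: DkX.
split=> // i.
have := diag_prod i hg hD; rewrite mulmxV // mxE eqxx /= => h.
by rewrite -[invmx g i i]mul1r -(mulVr (hu i)) -mulrA -h mulr1.
Qed.

Definition Uk k (A : mx) := Dk k (A - 1%:M).

Lemma Uk_Dk0 k (A : mx) : (1 <= k)%N -> Uk k A -> Dk 0 A /\ forall i, A i i = 1.
Proof.
move=> hk hA; split.
  move=> i j h; have := hA i j; rewrite !mxE; case: eqP => [e|_].
    by move: h; rewrite e; lia.
  by rewrite subr0; apply; lia.
move=> i; have := hA i i; rewrite !mxE eqxx /= => h.
by apply/eqP; rewrite -subr_eq0 h //; lia.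
Qed.

Lemma Ugrp_Uk (A : mx) : Ugrp A <-> Uk 1 A.
Proof.
split; last first.
  by move=> h; have [h1 h2] := Uk_Dk0 (leqnn 1) h; split => //; apply/upper_Dk.
move=> [hu hd] i j h; rewrite !mxE.
have [e|ne] := eqVneq i j; first by rewrite e hd subrr.
have ne' : (nat_of_ord i <> nat_of_ord j) by move=> e; move/eqP: ne; apply; apply: val_inj.
rewrite (hu i j) ?subrr //; lia.
Qed.

Lemma Uk_unit k (A : mx) : (1 <= k)%N -> Uk k A ->
  [/\ A \in unitmx, Dk 0 (invmx A) & forall i, invmx A i i = 1].
Proof.
move=> hk hA; have [h1 h2] := Uk_Dk0 hk hA.
have [u1 u2 u3] := ginv h1 (fun i => eq_ind_r (fun x => x \is a GRing.unit) (unitr1 R) (h2 i)).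
by split=> // i; rewrite u3 h2 invr1.
Qed.

Lemma Uk1 k : Uk k (1%:M : mx).
Proof. by rewrite /Uk subrr; apply: Dk0. Qed.

Lemma UkM k (A B : mx) : (1 <= k)%N -> Uk k A -> Uk k B -> Uk k (A *m B).
Proof.
move=> hk hA hB; rewrite /Uk.
have e : (A - 1%:M) *m (B - 1%:M) = A *m B - A - (B - 1%:M).
  by rewrite mulmxBl !mulmxBr !mul1mx !mulmx1.
rewrite (zm1 (A *m B) A B 1%:M) -e.
apply: DkD => //; apply: DkD => //.
apply: (Dk_le (k := k + k)); first lia.
exact: DkM.
Qed.

Lemma UkV k (A : mx) : (1 <= k)%N -> Uk k A -> Uk k (invmx A).
Proof.
move=> hk hA; have [u1 u2 u3] := Uk_unit hk hA; rewrite /Uk.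
have -> : invmx A - 1%:M = - ((A - 1%:M) *m invmx A).
  by rewrite mulmxBl mul1mx mulmxV // opprB.
apply: DkN; rewrite -[k](addn0 k); exact: DkM.
Qed.

Lemma Uk_comm k (x y : mx) : (1 <= k)%N -> Uk k x -> Uk 1 y -> Uk k.+1 (commx x y).
Proof.
move=> hk hx hy; have [ux vx _] := Uk_unit hk hx; have [uy vy _] := Uk_unit (leqnn 1) hy; rewrite /Uk.
have e1 : invmx x *m invmx y *m (y *m x) = 1%:M.
  by rewrite -mulmxA (mulmxA (invmx y)) mulVmx // mul1mx mulVmx.
have -> : commx x y - 1%:M = invmx x *m invmx y *m
   ((x - 1%:M) *m (y - 1%:M) - (y - 1%:M) *m (x - 1%:M)).
  rewrite !mulmxE idmxE comm_expand -!mulmxE mulmxBr e1 /commx !mulmxA //.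
apply: (Dk_le (k := (0 + 0) + (k + 1))); first lia.
apply: DkM; first by apply: DkM.
have hy' : Dk 1 (y - 1%:M) := hy.
apply: DkB; [exact: DkM|rewrite addnC; exact: DkM].
Qed.

Lemma gen_ind (P Q : mx -> Prop) : (forall x, P x -> Q x) -> Q 1%:M ->
  (forall x y, Q x -> Q y -> Q (x *m y)) -> (forall x, Q x -> Q (invmx x)) ->
  forall x, gen P x -> Q x.
Proof. move=> hP h1 hM hV x; elim => //; auto. Qed.

Lemma sub_gen (G H P : mx -> Prop) : is_subgroup G H -> (forall x, P x -> H x) ->
  forall x, gen P x -> H x.
Proof. by move=> [_ h1 hM hV] hP; apply: gen_ind. Qed.

Lemma gen_subgroup (G P : mx -> Prop) : is_subgroup G G -> (forall x, P x -> G x) ->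
  is_subgroup G (gen P).
Proof.
move=> hG hP; split; [exact: sub_gen hG hP|exact: gen1| exact: genM| exact: genV].
Qed.

Lemma commx_in (G H : mx -> Prop) x y : is_subgroup G H -> H x -> H y -> H (commx x y).
Proof. by move=> [_ _ hM hV] hx hy; rewrite /commx; apply: (hM) => //; apply: (hM) => //; apply: (hM); apply: (hV). Qed.

Lemma lcs_sub (G N H : mx -> Prop) : is_subgroup G N -> (forall x, H x -> N x) ->
  forall c x, lcs H c x -> N x.
Proof.
move=> hN hH; elim=> [|c IH] x /=; first exact: hH.
move=> hx; apply: (sub_gen hN) hx => z [a [b [ha hb ->]]]; apply: commx_in hN _ _; auto.
Qed.

Lemma U_lcs (s : seq mx) : (forall x, x \in s -> Ugrp x) ->
  forall c x, lcs (gen (fun x => x \in s)) c x -> Uk c.+1 x.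
Proof.
move=> hs.
have hg : forall x, gen (fun x => x \in s) x -> Uk 1 x.
  apply: gen_ind; [by move=> x /hs /Ugrp_Uk|exact: Uk1|by move=> x y; apply: UkM|by move=> x; apply: UkV].
elim=> [|c IH] x /=; first exact: hg.
apply: gen_ind; [|exact: Uk1|by move=> a b; apply: UkM|by move=> a; apply: UkV].
move=> z [a [b [ha hb ->]]]; apply: Uk_comm => //; auto.
Qed.

Lemma U_locnil : locally_nilpotent (@Ugrp R n).
Proof.
move=> s hs; exists n => x hx; have := U_lcs hs hx => h.
by apply/eqP; rewrite -subr_eq0; apply/eqP; apply: (Dkn (k := n.+1)).
Qed.

Variable I : {set 'I_n}.
Local Notation SG := (@Sgrp R n I).

Lemma Sgrp_unit g : SG g -> g \in unitmx.
Proof. by case=> /upper_Dk h1 h2 _; case: (ginv h1 h2). Qed.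

Lemma Sgrp_inv g : SG g -> SG (invmx g).
Proof.
case=> /upper_Dk h1 h2 h3; have [u1 u2 u3] := ginv h1 h2.
split; first exact/upper_Dk.
  by move=> i; rewrite u3 unitrV.
by move=> i hi; rewrite u3 h3 ?invr1.
Qed.

Lemma Sgrp_mul g h : SG g -> SG h -> SG (g *m h).
Proof.
case=> /upper_Dk g1 g2 g3 [] /upper_Dk h1 h2 h3.
split; first by apply/upper_Dk; rewrite -[0%N]/(0+0)%N; apply: DkM.
  by move=> i; rewrite diag_prod // unitrM g2 h2.
by move=> i hi; rewrite diag_prod // g3 ?h3 ?mulr1.
Qed.

Lemma Sgrp_1 : SG 1%:M.
Proof.
split; first exact/upper_Dk/Dk1.
  by move=> i; rewrite mxE eqxx unitr1.
by move=> i _; rewrite mxE eqxx.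
Qed.

Lemma Sgrp_subgroup : is_subgroup (SG) (SG).
Proof. split=> //; [exact: Sgrp_1|exact: Sgrp_mul|exact: Sgrp_inv]. Qed.

Lemma U_S x : Ugrp x -> SG x.
Proof. by case=> h1 h2; split=> // i; rewrite h2 // unitr1. Qed.

Lemma U_normal : is_normal (SG) (@Ugrp R n).
Proof.
split.
  split; first exact: U_S.
  - exact/Ugrp_Uk/Uk1.
  - by move=> x y /Ugrp_Uk hx /Ugrp_Uk hy; apply/Ugrp_Uk; apply: UkM.
  - by move=> x /Ugrp_Uk hx; apply/Ugrp_Uk; apply: UkV.
move=> g h hg [/upper_Dk h1 h2].
have [/upper_Dk g1 g2 _] := hg; have [/upper_Dk v1 _ _] := Sgrp_inv hg.
have [_ _ v3] := ginv g1 g2.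
have p1 : Dk 0 (invmx g *m h) by rewrite -[0%N]/(0+0)%N; apply: DkM.
split; first by apply/upper_Dk; rewrite -[0%N]/(0+0)%N; apply: DkM.
by move=> i; rewrite diag_prod // diag_prod // v3 h2 mulr1 mulVr.
Qed.

Lemma entry01 (P Q : mx) (i0 i1 : 'I_n) : val i1 = (val i0).+1 -> Dk 0 P -> Dk 0 Q ->
  (P *m Q) i0 i1 = P i0 i0 * Q i0 i1 + P i0 i1 * Q i1 i1.
Proof.
move=> e hP hQ; have ne : i0 != i1 by apply/eqP => h; move: e; rewrite h; lia.
rewrite mxE (bigD1 i0) //= (bigD1 i1) /=; last by rewrite eq_sym.
rewrite big1 ?addr0 // => m /andP [h1 h2].
move: h1 h2; rewrite -!(inj_eq val_inj) /= => /eqP h1' /eqP h2'.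
have [lt|ge] := ltnP m i0; first by rewrite hP ?mul0r // addn0.
have a1 : nat_of_ord m <> nat_of_ord i0 := h1'.
have a2 : nat_of_ord m <> nat_of_ord i1 := h2'.
have e' : nat_of_ord i1 = (nat_of_ord i0).+1 := e.
by rewrite (hQ m i1) ?mulr0 // addn0; lia.
Qed.

Lemma comm_rel (P Q : mx) : P \in unitmx -> Q \in unitmx -> P *m Q = Q *m P *m commx P Q.
Proof.
move=> uP uQ; rewrite /commx !mulmxA -(mulmxA Q) mulmxV // mulmx1 mulmxV // mul1mx //.
Qed.
End Gen.

Section Dom.
Variables (R : idomainType) (n : nat).
Local Notation mx := 'M[R]_n.

Lemma comm_entries (P Q z : mx) (i0 i1 : 'I_n) : val i1 = (val i0).+1 ->
  Dk 0 P -> Dk 0 Q -> Dk 0 z ->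
  P i0 i0 \is a GRing.unit -> Q i0 i0 \is a GRing.unit ->
  P i1 i1 \is a GRing.unit -> Q i1 i1 \is a GRing.unit ->
  P *m Q = Q *m P *m z ->
  [/\ z i0 i0 = 1, z i1 i1 = 1 &
   Q i0 i0 * P i0 i0 * z i0 i1 = P i0 i0 * Q i0 i1 + P i0 i1 * Q i1 i1 - (Q i0 i0 * P i0 i1 + Q i0 i1 * P i1 i1)].
Proof.
move=> e hP hQ hz u1 u2 u3 u4 E.
have hQP : Dk 0 (Q *m P) by rewrite -[0%N]/(0+0)%N; apply: DkM.
have d0 : z i0 i0 = 1.
  have := congr1 (fun M : mx => M i0 i0) E => /=; rewrite !diag_prod // => h.
  apply: (@mulrI _ (P i0 i0 * Q i0 i0)); first by rewrite unitrM u1 u2.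
  rewrite mulr1 [RHS]h; ring.
have d1 : z i1 i1 = 1.
  have := congr1 (fun M : mx => M i1 i1) E => /=; rewrite !diag_prod // => h.
  apply: (@mulrI _ (P i1 i1 * Q i1 i1)); first by rewrite unitrM u3 u4.
  rewrite mulr1 [RHS]h; ring.
split=> //.
have := congr1 (fun M : mx => M i0 i1) E => /=; rewrite (entry01 e hP hQ) (entry01 e hQP hz) (entry01 e hQ hP) diag_prod // d1 => ->.
ring.
Qed.
End Dom.

Section Max.
Variables (R : idomainType) (n : nat).
Local Notation mx := 'M[R]_n.+1.
Variable I : {set 'I_n.+1}.
Local Notation SG := (@Sgrp R n.+1 I).

Lemma sq_neq0 (a c : R) : a != c -> (a - c) * (a - c) != 0.
Proof. by move=> h; rewrite mulf_neq0 // subr_eq0. Qed.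

Lemma max_U (N : mx -> Prop) : I \proper [set: 'I_n.+1] -> is_normal SG N ->
  locally_nilpotent N -> forall x, N x -> Ugrp x.
Proof.
move=> hI [hN hnorm] hloc x hx.
have sgN : forall z, N z -> SG z by case: hN.
have [hxu hxunit hx1] := sgN x hx.
have key : forall k, (k < n)%N -> x (inord k) (inord k) = x (inord k.+1) (inord k.+1).
  move=> k hk; set i0 : 'I_n.+1 := inord k; set i1 : 'I_n.+1 := inord k.+1.
  have e : val i1 = (val i0).+1 by rewrite /i0 /i1 /= !inordK //; lia.
  have e' : nat_of_ord i1 = (nat_of_ord i0).+1 := e.
  have ne01 : i0 != i1 by apply/eqP => h; move: e'; rewrite h; lia.
  apply/eqP; apply/negPn/negP => hne.
  have [E Edef] : {E : mx | E = 1%:M + delta_mx i0 i1} by exists (1%:M + delta_mx i0 i1).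
  have EU : Ugrp E.
    split.
      move=> i j h; rewrite Edef !mxE.
      have nij : i != j by apply/eqP => h'; move: h; rewrite h'; lia.
      rewrite (negPf nij) add0r.
      case: eqP => [h0|]; last by move=> _; rewrite andFb.
      case: eqP => [h1|]; last by rewrite andbF.
      by exfalso; move: h e'; rewrite -h0 -h1; lia.
    move=> i; rewrite Edef !mxE eqxx.
    case: eqP => [h0|]; last by rewrite andFb addr0.
    case: eqP => [h1|]; last by rewrite andbF addr0.
    by exfalso; move/eqP: ne01; apply; rewrite -h0 -h1.
  have [Eu _ _] := Uk_unit (leqnn 1) (proj1 (Ugrp_Uk E) EU).
  have [y ydef] : {y : mx | y = invmx E *m x *m E} by exists (invmx E *m x *m E).
  have hy : N y by rewrite ydef; exact: hnorm E x (U_S I EU) hx.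
  have Ey : E *m y = x *m E by rewrite ydef !mulmxA mulmxV // mul1mx.
  have E00 : E i0 i0 = 1 by rewrite Edef !mxE eqxx (negPf ne01) andbF addr0.
  have E11 : E i1 i1 = 1 by rewrite Edef !mxE eqxx eq_sym (negPf ne01) andFb addr0.
  have E01 : E i0 i1 = 1 by rewrite Edef !mxE (negPf ne01) !eqxx add0r.
  have [/upper_Dk yu yunit _] := sgN y hy.
  have /upper_Dk xD := hxu.
  have ED : Dk 0 E by apply/upper_Dk; case: EU.
  have y00 : y i0 i0 = x i0 i0.
    by have := congr1 (fun M : mx => M i0 i0) Ey => /=; rewrite !diag_prod // E00 mul1r mulr1.
  have y11 : y i1 i1 = x i1 i1.
    by have := congr1 (fun M : mx => M i1 i1) Ey => /=; rewrite !diag_prod // E11 mul1r mulr1.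
  have y01 : y i0 i1 = x i0 i0 + x i0 i1 - x i1 i1.
    have := congr1 (fun M : mx => M i0 i1) Ey => /=.
    rewrite (entry01 e ED yu) (entry01 e xD ED) E00 E11 E01 y11 !mul1r !mulr1 => h.
    by rewrite -h addrK.
  pose H := gen (fun z => z \in [:: x; y]).
  have hs : forall z, z \in [:: x; y] -> N z.
    by move=> z; rewrite !inE => /orP [/eqP ->|/eqP ->].
  have hHN : forall z, H z -> N z := sub_gen hN hs.
  have lcsN : forall j z, lcs H j z -> N z := lcs_sub hN hHN.
  have Hx : H x by apply: genX; rewrite inE eqxx.
  have Hy : H y by apply: genX; rewrite !inE eqxx orbT.
  have hz : forall j, exists z, [/\ lcs H j.+1 z, z i0 i0 = 1, z i1 i1 = 1 & z i0 i1 != 0].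
    elim=> [|j [z [hz1 hz2 hz3 hz4]]].
      exists (commx x y).
      have hc : N (commx x y) by apply: (lcsN 1%N); apply: genX; exists x, y.
      have [/upper_Dk cu _ _] := sgN _ hc.
      have [c00 c11 c01] := comm_entries e xD yu cu (hxunit i0) (yunit i0) (hxunit i1) (yunit i1)
         (comm_rel (Sgrp_unit (sgN _ hx)) (Sgrp_unit (sgN _ hy))).
      split=> //; first by apply: genX; exists x, y.
      apply/eqP => h0; move: c01; rewrite h0 mulr0 y00 y11 y01.
      have -> : x i0 i0 * (x i0 i0 + x i0 i1 - x i1 i1) + x i0 i1 * x i1 i1 -
          (x i0 i0 * x i0 i1 + (x i0 i0 + x i0 i1 - x i1 i1) * x i1 i1) =
          (x i0 i0 - x i1 i1) * (x i0 i0 - x i1 i1) by ring.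
      by move/esym/eqP; rewrite (negPf (sq_neq0 hne)).
    exists (commx z x).
    have hzN : N z := lcsN _ _ hz1.
    have hc : N (commx z x) by apply: (lcsN j.+2); apply: genX; exists z, x.
    have [/upper_Dk cu _ _] := sgN _ hc.
    have [/upper_Dk zu zunit _] := sgN _ hzN.
    have [c00 c11 c01] := comm_entries e zu xD cu (zunit i0) (hxunit i0) (zunit i1) (hxunit i1)
         (comm_rel (Sgrp_unit (sgN _ hzN)) (Sgrp_unit (sgN _ hx))).
    split=> //; first by apply: genX; exists z, x.
    apply/eqP => h0; move: c01; rewrite h0 mulr0 hz2 hz3.
    have -> : 1 * x i0 i1 + z i0 i1 * x i1 i1 - (x i0 i0 * z i0 i1 + x i0 i1 * 1) =
        z i0 i1 * (x i1 i1 - x i0 i0) by ring.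
    move/esym/eqP; rewrite mulf_eq0 (negPf hz4) /= subr_eq0 eq_sym (negPf hne) //.
  have [c hc] := hloc [:: x; y] hs.
  case: c hc => [|c] hc.
    have := hc x Hx => hx1'; move/eqP: hne; apply.
    by rewrite hx1' !mxE !eqxx.
  have [z [hz1 _ _ hz4]] := hz c.
  by move: hz4; rewrite (hc z hz1) mxE (negPf ne01) eqxx.
have [j hj] : exists j, j \notin I by case/properP: hI => _ [j _ hj]; exists j.
have all0 : forall k, (k <= n)%N -> x (inord k) (inord k) = x (inord 0) (inord 0).
  elim=> [|k IH] hk //; rewrite -key; [apply: IH|]; lia.
split=> // i.
rewrite -(inord_val i) all0; last by have := ltn_ord i.
rewrite -(all0 j); last by have := ltn_ord j.
by rewrite inord_val hx1.
Qed.
End Max.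

Section Aut.
Variables (R : comUnitRingType) (n : nat) (I : {set 'I_n}).
Local Notation mx := 'M[R]_n.
Local Notation SG := (@Sgrp R n I).
Variable f : mx -> mx.
Hypothesis hf : is_automorphism SG f.

Lemma f1 : f 1%:M = 1%:M.
Proof.
case: hf => hG _ _ hM.
have s1 := Sgrp_1 R I; have u := Sgrp_unit (hG _ s1).
have e : f 1%:M *m f 1%:M = f 1%:M *m 1%:M by rewrite -hM // mulmx1 mulmx1.
by have := congr1 (mulmx (invmx (f 1%:M))) e; rewrite !mulKmx.
Qed.

Lemma fV x : SG x -> f (invmx x) = invmx (f x).
Proof.
case: hf => hG _ _ hM hx.
have u := Sgrp_unit (hG _ hx); have ux := Sgrp_unit hx.
have e : f x *m f (invmx x) = 1%:M by rewrite -hM ?mulmxV ?f1 //; exact: Sgrp_inv.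
by have := congr1 (mulmx (invmx (f x))) e; rewrite mulKmx // mulmx1.
Qed.

Lemma fM x y : SG x -> SG y -> f (x *m y) = f x *m f y.
Proof. by case: hf => _ _ _ hM; apply: hM. Qed.

Lemma fC x y : SG x -> SG y -> f (commx x y) = commx (f x) (f y).
Proof.
move=> hx hy; have vx := Sgrp_inv hx; have vy := Sgrp_inv hy.
rewrite /commx !fM ?fV //; do ! apply: Sgrp_mul => //.
Qed.

Lemma SG_gen (s : seq mx) : (forall x, x \in s -> SG x) ->
  forall w, gen (fun x => x \in s) w -> SG w.
Proof. move=> hs; exact: sub_gen (Sgrp_subgroup R I) hs. Qed.

Lemma fwd_lcs (s : seq mx) : (forall x, x \in s -> SG x) ->
  forall j w, lcs (gen (fun x => x \in s)) j w ->
    SG w /\ lcs (gen (fun x => x \in map f s)) j (f w).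
Proof.
move=> hs.
have base : forall w, gen (fun x => x \in s) w -> SG w /\ gen (fun x => x \in map f s) (f w).
  apply: gen_ind.
  - by move=> x hx; split; [exact: hs|apply: genX; exact: map_f].
  - by split; [exact: Sgrp_1|rewrite f1; exact: gen1].
  - by move=> x y [hx gx] [hy gy]; split; [exact: Sgrp_mul|rewrite fM //; exact: genM].
  - by move=> x [hx gx]; split; [exact: Sgrp_inv|rewrite fV //; exact: genV].
elim=> [|j IH] /=; first exact: base.
apply: gen_ind.
- move=> z [a [b [ha hb ->]]]; have [sa la] := IH _ ha; have [sb lb] := base _ hb.
  split; first exact: commx_in (Sgrp_subgroup R I) sa sb.
  by apply: genX; exists (f a), (f b); rewrite fC.
- by split; [exact: Sgrp_1|rewrite f1; exact: gen1].
- by move=> x y [hx gx] [hy gy]; split; [exact: Sgrp_mul|rewrite fM //; exact: genM].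
- by move=> x [hx gx]; split; [exact: Sgrp_inv|rewrite fV //; exact: genV].
Qed.

Lemma bwd_lcs (s : seq mx) : (forall x, x \in s -> SG x) ->
  forall j z, lcs (gen (fun x => x \in map f s)) j z ->
    exists w, [/\ lcs (gen (fun x => x \in s)) j w, SG w & f w = z].
Proof.
move=> hs.
have base : forall z, gen (fun x => x \in map f s) z ->
    exists w, [/\ gen (fun x => x \in s) w, SG w & f w = z].
  apply: gen_ind.
  - by move=> z /mapP [w hw ->]; exists w; split; [exact: genX|exact: hs|].
  - by exists 1%:M; split; [exact: gen1|exact: Sgrp_1|exact: f1].
  - move=> x y [a [ga sa <-]] [b [gb sb <-]]; exists (a *m b).
    by split; [exact: genM|exact: Sgrp_mul|rewrite fM].
  - move=> x [a [ga sa <-]]; exists (invmx a).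
    by split; [exact: genV|exact: Sgrp_inv|rewrite fV].
elim=> [|j IH] /=; first exact: base.
apply: gen_ind.
- move=> z' [a [b [ha hb ->]]]; have [a' [la sa <-]] := IH _ ha; have [b' [lb sb <-]] := base _ hb.
  exists (commx a' b'); split; first by apply: genX; exists a', b'.
    exact: commx_in (Sgrp_subgroup R I) sa sb.
  by rewrite fC.
- by exists 1%:M; split; [exact: gen1|exact: Sgrp_1|exact: f1].
- move=> x y [a [ga sa <-]] [b [gb sb <-]]; exists (a *m b).
  by split; [exact: genM|exact: Sgrp_mul|rewrite fM].
- move=> x [a [ga sa <-]]; exists (invmx a).
  by split; [exact: genV|exact: Sgrp_inv|rewrite fV].
Qed.
End Aut.

Lemma lift_seq (T : eqType) (P : T -> Prop) (f : T -> T) (s : seq T) :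
  (forall z, z \in s -> exists x, P x /\ f x = z) ->
  exists s', (forall x, x \in s' -> P x) /\ map f s' = s.
Proof.
elim: s => [|a s IH] h; first by exists [::].
have [x [px fx]] := h a (mem_head a s).
have [s' [h1 h2]] : exists s', (forall x, x \in s' -> P x) /\ map f s' = s.
  by apply: IH => z hz; apply: h; rewrite inE hz orbT.
exists (x :: s'); split; last by rewrite /= fx h2.
by move=> y; rewrite inE => /orP [/eqP ->|/h1].
Qed.

Theorem mainTheorem7 (R : idomainType) (n : nat) (I : {set 'I_n}) :
  (2 <= n)%N -> I \proper [set: 'I_n] ->
  hirsch_plotkin_radical (Sgrp I) (@Ugrp R n) /\
  characteristic (Sgrp I) (@Ugrp R n).
Proof.
case: n I => [|n] I h2 hI; first by [].
have hmax := @max_U R n I.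
have hUn := U_normal R I.
have [[_ U1 UM UV] Unorm] := hUn.
split; first by split=> //; [exact: U_locnil|move=> N hN hl x hx; exact: hmax N hI hN hl x hx].
split; first exact: hUn.1.
move=> f hf y.
have [fG finj fsur _] := hf.
split.
- move=> hy; have Gy := U_S I hy; have [x [Gx fx]] := fsur y Gy.
  exists x; split=> //.
  apply: (hmax (fun x => Sgrp I x /\ Ugrp (f x))) => //.
  + split.
      split; first by move=> z [].
      * by split; [exact: Sgrp_1|rewrite (f1 hf)].
      * move=> a b [ga ua] [gb ub]; split; first exact: Sgrp_mul.
        by rewrite (fM hf) //; apply: UM.
      * move=> a [ga ua]; split; first exact: Sgrp_inv.
        by rewrite (fV hf) //; apply: UV.
    move=> g h hg [gh uh]; have vg := Sgrp_inv hg.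
    split; first by do ! apply: Sgrp_mul.
    rewrite !(fM hf) ?(fV hf) //; last exact: Sgrp_mul.
    by apply: Unorm => //; apply: fG.
  + move=> s hs.
    have [c hc] := U_locnil (s := map f s) (fun z hz => match mapP hz with ex_intro2 w hw e => eq_ind_r _ (proj2 (hs w hw)) e end).
    exists c => w hw.
    have [sw lw] := fwd_lcs hf (fun z hz => proj1 (hs z hz)) hw.
    apply: finj => //; first exact: Sgrp_1.
    by rewrite (f1 hf); apply: hc.
  + by split=> //; rewrite fx.
- move=> [x [hx <-]].
  apply: (hmax (fun y => exists x, Ugrp x /\ f x = y)) => //; last by exists x.
  + split.
      split.
      * by move=> z [a [ua <-]]; apply: fG; apply: U_S.
      * by exists 1%:M; split; [exact: U1|exact: (f1 hf)].
      * move=> a b [a' [ua <-]] [b' [ub <-]]; exists (a' *m b'); split; first exact: UM.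
        by rewrite (fM hf) //; apply: U_S.
      * move=> a [a' [ua <-]]; exists (invmx a'); split; first exact: UV.
        by rewrite (fV hf) //; apply: U_S.
    move=> g h hg [u [hu <-]]; have [g0 [Gg0 <-]] := fsur g hg.
    exists (invmx g0 *m u *m g0); split; first exact: Unorm.
    have Gu := U_S I hu.
    by rewrite !(fM hf) ?(fV hf) //; do ? apply: Sgrp_mul => //; apply: Sgrp_inv.
  + move=> s hs.
    have [s' [hs' e]] := lift_seq hs.
    have [c hc] := U_locnil hs'.
    exists c => z; rewrite -e => hz.
    have [w [lw sw <-]] := bwd_lcs hf (fun z hz => U_S I (hs' z hz)) hz.
    by rewrite (hc w lw) (f1 hf).
Qed.
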